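(* Let $a,b,u,v$ be integers with $b>a\ge2$ and $u,v\ge2$, and set $X:=ab-a-b$. Suppose that (1) $a$, $b$ and $uv-1$ are pairwise coprime; (2) $\frac{1}{a}+\frac{1}{b}+\frac{v}{uv-1}>1$; (3) $vab-1=(uv-1)X$. Then $u\in\{2,3,6\}$; moreover, if $u=6$ then $(a,b)=(2,3)$, i.e. the triple $(a,b,uv-1)$ equals $(2,3,6v-1)$. *)

(* Defs.v *)
From Stdlib Require Import ZArith Znumtheory Reals.

(* Main.v *)
Require Import Defs.
From Stdlib Require Import ZArith Znumtheory Reals Lia.

Theorem lemma3p4 (a b u v : Z) :
  (2 <= a)%Z -> (a < b)%Z -> (2 <= u)%Z -> (2 <= v)%Z ->
  rel_prime a b -> rel_prime a (u * v - 1) -> rel_prime b (u * v - 1) ->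
  (1 / IZR a + 1 / IZR b + IZR v / IZR (u * v - 1) > 1)%R ->
  (v * a * b - 1 = (u * v - 1) * (a * b - a - b))%Z ->
  (u = 2 \/ u = 3 \/ u = 6)%Z /\ (u = 6 -> a = 2 /\ b = 3)%Z.
Proof.
  intros Ha Hab Hu Hv _ _ _ _ E.
  set (X := (a * b - a - b)%Z) in *.
  set (k := (u * X - a * b)%Z).
  assert (HX : (X = 1 + v * k)%Z) by (unfold k; nia).
  assert (HX1 : (1 <= X)%Z) by (unfold X; nia).
  assert (Hk : (0 <= k)%Z) by nia.
  assert (Hab2 : (0 <= (a - 2) * (b - 2))%Z) by nia.
  assert (Hab' : (a * b = u + u * v * k - k)%Z) by (unfold k; nia).
  destruct (Z.eq_dec k 0) as [K0|K0].
  - rewrite K0 in HX. 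
    assert (a = 2 /\ b = 3)%Z as [-> ->] by (unfold X in HX; nia).
    rewrite K0 in Hab'. lia.
  - assert (u <= 3)%Z.
    { destruct (Z_le_gt_dec u 3); [lia|].
      exfalso. unfold X in HX. nia. }
    lia.
Qed.
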